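(* Let $r,k,m$ be positive integers and $\alpha$ real with $\alpha>k>r$, such that $\alpha-m$ is not a negative integer and $\alpha\ne m+r-j$, $\alpha\neq m+k-j$ for $j=1,\dots,m$. Then $$\sum_{n=1}^\infty\frac{H_{n+\alpha-m}^{(2)}}{(n+r)(n+k)}=\frac1{k-r}\Bigg\{(r-\alpha)\sum_{j=1}^r\frac{H_{\alpha+j-r}^{(2)}}{j(\alpha+j-r)}-(k-\alpha)\sum_{j=1}^k\frac{H_{\alpha+j-k}^{(2)}}{j(\alpha+j-k)}-\sum_{j=1}^{k-r}\frac{H_{\alpha+j-k}}{(\alpha+j-k)^2}$$ $$+2H_{\alpha-r}^{(3)}+H_{\alpha-k}\zeta(2)+2H_{\alpha-r}H_{\alpha-r}^{(2)}-2H_{\alpha-k}^{(3)}-H_{\alpha-r}\zeta(2)-2H_{\alpha-k}H_{\alpha-k}^{(2)}\Bigg\}$$ $$-\frac1{k-r}\Bigg\{\sum_{j=1}^m\frac{H_{\alpha+j-m}-H_r}{(\alpha+j-m-r)^2}-\sum_{j=1}^m\frac{\zeta(2)-H_{\alpha+j-m}^{(2)}}{\alpha+j-m-r}-\sum_{j=1}^m\frac{H_{\alpha+j-m}-H_k}{(\alpha+j-m-k)^2}+\sum_{j=1}^m\frac{\zeta(2)-H_{\alpha+j-m}^{(2)}}{\alpha+j-m-k}\Bigg\}.$$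
   Context: Shifted harmonic numbers: for a real $\alpha$ that is not a negative integer, $H_\alpha := \sum_{k=1}^\infty\left(\frac1k-\frac1{k+\alpha}\right)$ and, for integers $m\ge 2$, $H_\alpha^{(m)} := \sum_{k=1}^\infty\left(\frac1{k^m}-\frac1{(k+\alpha)^m}\right)=\zeta(m)-\zeta(m,\alpha+1)$, where $\zeta$ is the Riemann zeta function and $\zeta(s,\alpha+1)=\sum_{n=1}^\infty (n+\alpha)^{-s}$ is the Hurwitz zeta function. For nonnegative integers these are the ordinary harmonic numbers. Empty sums are $0$. *)

(* Defs.v *)
From Stdlib Require Import Reals Lra ClassicalEpsilon.
Open Scope R_scope.

(* Limit of a real sequence (0 if it does not converge; only used on
   convergent sequences). *)
Definition lim_seq (u : nat -> R) : R :=
  match excluded_middle_informative (exists l, Un_cv u l) with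
  | left H => proj1_sig (constructive_indefinite_description _ H)
  | right _ => 0
  end.

Fixpoint fsum (n : nat) (f : nat -> R) : R :=
  match n with
  | O => 0
  | S p => fsum p f + f (S p)
  end.

Definition psum (a : nat -> R) (N : nat) : R := fsum N a.

Definition Hsh (alpha : R) : R :=
  lim_seq (psum (fun k => 1 / INR k - 1 / (INR k + alpha))).

Definition Hshm (m : nat) (alpha : R) : R :=
  lim_seq (psum (fun k => 1 / INR k ^ m - 1 / (INR k + alpha) ^ m)).

Definition zeta (s : nat) : R := lim_seq (psum (fun n => 1 / INR n ^ s)).

(* Main.v *)
Require Import Defs.
From Stdlib Require Import Reals Lra Lia FunctionalExtensionality ClassicalEpsilon.
Open Scope R_scope.

Lemma lim_seq_eq u l : Un_cv u l -> lim_seq u = l.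
Proof.
  intros H. unfold lim_seq.
  destruct (excluded_middle_informative _) as [e|n].
  - destruct (constructive_indefinite_description _ e) as [l' Hl']; simpl.
    eapply UL_sequence; eauto.
  - exfalso; apply n; eauto.
Qed.

Lemma Un_cv_ext u v l : (forall n, u n = v n) -> Un_cv u l -> Un_cv v l.
Proof.
  intros H Hu. replace v with u; auto. apply functional_extensionality; auto.
Qed.

Lemma Un_cv_eql u l l' : l = l' -> Un_cv u l -> Un_cv u l'.
Proof. intros ->; auto. Qed.

Lemma cv_const c : Un_cv (fun _ => c) c.
Proof. intros eps He; exists 0%nat; intros; unfold R_dist; rewrite Rminus_diag, Rabs_R0; lra. Qed.

Lemma cv_scal u l a : Un_cv u l -> Un_cv (fun n => a * u n) (a * l).
Proof. intros H; apply (CV_mult (fun _ => a)); auto using cv_const. Qed.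

Lemma fsum_ext n f g : (forall j, (1 <= j <= n)%nat -> f j = g j) -> fsum n f = fsum n g.
Proof.
  induction n; simpl; intros H; auto.
  rewrite IHn, H; [reflexivity|lia|intros; apply H; lia].
Qed.

Lemma fsum_plus n f g : fsum n (fun j => f j + g j) = fsum n f + fsum n g.
Proof. induction n; simpl; [ring|rewrite IHn; ring]. Qed.

Lemma fsum_minus n f g : fsum n (fun j => f j - g j) = fsum n f - fsum n g.
Proof. induction n; simpl; [ring|rewrite IHn; ring]. Qed.

Lemma fsum_scal n a f : fsum n (fun j => a * f j) = a * fsum n f.
Proof. induction n; simpl; [ring|rewrite IHn; ring]. Qed.

Lemma fsum_S1 n f : fsum (S n) f = f 1%nat + fsum n (fun j => f (S j)).
Proof. induction n; simpl in *; [ring| rewrite IHn; ring]. Qed.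

Lemma fsum_zero n : fsum n (fun _ => 0) = 0.
Proof. induction n; simpl; [ring|rewrite IHn; ring]. Qed.

Lemma fsum_shift g N s : fsum (N + s) g = fsum s g + fsum N (fun n => g (n + s)%nat).
Proof. induction N; simpl; [ring| rewrite IHN; ring]. Qed.

Lemma fsum_le n f g : (forall j, (1 <= j)%nat -> f j <= g j) -> fsum n f <= fsum n g.
Proof. induction n; simpl; intros H; [lra|]. pose proof (H (S n) ltac:(lia)). pose proof (IHn H). lra. Qed.

Lemma sum_inv_sq_bound N : fsum (S N) (fun k => 1 / INR k ^ 2) <= 2 - 1 / INR (S N).
Proof.
  induction N.
  - simpl. replace (1 / (1 * (1 * 1))) with 1 by field. replace (1 / 1) with 1 by field. lra.
  - change (fsum (S (S N)) (fun k => 1 / INR k ^ 2)) with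
      (fsum (S N) (fun k => 1 / INR k ^ 2) + 1 / INR (S (S N)) ^ 2).
    set (n := INR (S N)). assert (Hn : INR (S (S N)) = n + 1) by (unfold n; rewrite (S_INR (S N)); ring).
    rewrite Hn. assert (n >= 1) by (unfold n; rewrite S_INR; pose proof (pos_INR N); lra).
    fold n in IHN. enough (1/(n+1)^2 + 1/(n+1) <= 1/n) by lra.
    assert (e : 1/n - (1/(n+1)^2 + 1/(n+1)) = 1/(n*(n+1)^2)) by (field; lra).
    assert (0 < 1/(n*(n+1)^2)).
    { apply Rdiv_lt_0_compat; [lra|]. apply Rmult_lt_0_compat; [lra|]. apply pow_lt; lra. }
    lra.
Qed.

Lemma sum_inv_sq_bound' N : fsum N (fun k => 1 / INR k ^ 2) <= 2.
Proof.
  destruct N; [simpl; lra|].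
  pose proof (sum_inv_sq_bound N). assert (0 < 1 / INR (S N)).
  { apply Rdiv_lt_0_compat; [lra| apply lt_0_INR; lia]. } lra.
Qed.

Definition tm (m : nat) (x : R) := fun k : nat => 1 / INR k ^ m - 1 / (INR k + x) ^ m.

Lemma Hshm_def m x : Hshm m x = lim_seq (psum (tm m x)).
Proof. reflexivity. Qed.

Lemma inv_le a b : 0 < a -> a <= b -> 1 / b <= 1 / a.
Proof. intros. unfold Rdiv; rewrite !Rmult_1_l; apply Rinv_le_contravar; lra. Qed.

Lemma tm_bound m x k : (1 <= m)%nat -> 0 <= x -> (1 <= k)%nat ->
  0 <= tm m x k <= (1 + x) * (1 / INR k ^ 2).
Proof.
  intros Hm Hx Hk. unfold tm. assert (Ht : 1 <= INR k) by (apply (le_INR 1); lia).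
  set (t := INR k) in *.
  assert (Hp : 0 < t ^ m) by (apply pow_lt; lra).
  assert (Hq : 0 < (t + x) ^ m) by (apply pow_lt; lra).
  assert (1 / (t + x) ^ m <= 1 / t ^ m) by (apply inv_le; [lra| apply pow_incr; lra]).
  assert (0 < 1 / (t + x) ^ m) by (apply Rdiv_lt_0_compat; lra).
  split; [lra|].
  destruct m as [|[|m']]; [lia| |].
  - rewrite !pow_1.
    replace (1 / t - 1 / (t + x)) with (x * (1 / (t * (t + x)))) by (field; lra).
    assert (1 / (t * (t + x)) <= 1 / t ^ 2) by (apply inv_le; [nra|nra]).
    assert (0 < 1 / t ^ 2) by (apply Rdiv_lt_0_compat; nra).
    nra.
  - assert (1 / t ^ S (S m') <= 1 / t ^ 2).
    { apply inv_le; [nra|]. apply Rle_pow; [lra|lia]. }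
    assert (0 < 1 / t ^ 2) by (apply Rdiv_lt_0_compat; nra).
    nra.
Qed.

Lemma cv_exists_nonneg m x : (1 <= m)%nat -> 0 <= x -> exists l, Un_cv (psum (tm m x)) l.
Proof.
  intros Hm Hx.
  destruct (growing_cv (psum (tm m x))) as [l Hl].
  - intros n. unfold psum. simpl. pose proof (tm_bound m x (S n) Hm Hx ltac:(lia)). lra.
  - exists ((1 + x) * 2). intros y [i ->]. unfold psum.
    apply Rle_trans with (fsum i (fun k => (1 + x) * (1 / INR k ^ 2))).
    + apply fsum_le; intros; apply tm_bound; auto.
    + rewrite fsum_scal. pose proof (sum_inv_sq_bound' i). nra.
  - exists l; auto.
Qed.

Lemma tm_shift_psum m x N :
  psum (tm m (x + 1)) N - psum (tm m x) N = 1 / (x + 1) ^ m - 1 / (INR N + x + 1) ^ m.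
Proof.
  unfold psum. induction N.
  - simpl. replace (0 + x + 1) with (x + 1) by ring. ring.
  - simpl fsum.
    assert (tm m (x+1) (S N) - tm m x (S N) = 1/(INR N + x + 1)^m - 1/(INR (S N) + x + 1)^m).
    { unfold tm. replace (INR N + x + 1) with (INR (S N) + x) by (rewrite S_INR; ring).
      replace (INR (S N) + x + 1) with (INR (S N) + (x + 1)) by ring. ring. }
    lra.
Qed.

Lemma cv_inv_pow y m : (1 <= m)%nat -> Un_cv (fun N => 1 / (INR N + y) ^ m) 0.
Proof.
  intros Hm.
  apply Un_cv_ext with (fun N => / (INR N + y) ^ m).
  { intros; unfold Rdiv; ring. }
  apply cv_infty_cv_0. intros M.
  destruct (INR_unbounded (Rabs M + Rabs y + 1)) as [N HN].
  exists N; intros n Hn. apply le_INR in Hn.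
  assert (1 <= INR n + y) by (pose proof (Rle_abs (-y)); rewrite Rabs_Ropp in *; pose proof (Rabs_pos M); lra).
  assert (INR n + y <= (INR n + y) ^ m).
  { destruct m; [lia|]. rewrite <- (pow_1 (INR n + y)) at 1. apply Rle_pow; [lra|lia]. }
  pose proof (Rle_abs M). pose proof (Rle_abs (-y)); rewrite Rabs_Ropp in *. lra.
Qed.

Lemma cv_exists m x : (1 <= m)%nat -> exists l, Un_cv (psum (tm m x)) l.
Proof.
  intros Hm.
  destruct (INR_unbounded (- x)) as [n Hn].
  revert x Hn. induction n; intros x Hn.
  - apply cv_exists_nonneg; auto. simpl in Hn; lra.
  - destruct (IHn (x + 1)) as [l Hl]. { rewrite S_INR in Hn; lra. }
    exists (l - (1 / (x + 1) ^ m - 0)).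
    apply Un_cv_ext with (fun N => psum (tm m (x + 1)) N - (1 / (x + 1) ^ m - 1 / (INR N + (x + 1)) ^ m)).
    { intros N. pose proof (tm_shift_psum m x N). replace (INR N + (x+1)) with (INR N + x + 1) by ring. lra. }
    apply CV_minus; auto. apply CV_minus; [apply cv_const| apply cv_inv_pow; auto].
Qed.

Lemma cv_Hshm m x : (1 <= m)%nat -> Un_cv (psum (tm m x)) (Hshm m x).
Proof.
  intros Hm. destruct (cv_exists m x Hm) as [l Hl]. rewrite Hshm_def, (lim_seq_eq _ _ Hl); auto.
Qed.

Lemma Hshm_shift m x : (1 <= m)%nat -> Hshm m (x + 1) = Hshm m x + 1 / (x + 1) ^ m.
Proof.
  intros Hm. rewrite (Hshm_def m (x + 1)). apply lim_seq_eq.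
  apply Un_cv_ext with (fun N => psum (tm m x) N + (1 / (x + 1) ^ m - 1 / (INR N + (x + 1)) ^ m)).
  { intros N. pose proof (tm_shift_psum m x N). replace (INR N + (x+1)) with (INR N + x + 1) by ring. lra. }
  replace (Hshm m x + 1 / (x + 1) ^ m) with (Hshm m x + (1 / (x + 1) ^ m - 0)) by ring.
  apply CV_plus; [apply cv_Hshm; auto|]. apply CV_minus; [apply cv_const| apply cv_inv_pow; auto].
Qed.

Lemma Hshm_shift_down m y : (1 <= m)%nat -> Hshm m (y - 1) = Hshm m y - 1 / y ^ m.
Proof.
  intros Hm. pose proof (Hshm_shift m (y - 1) Hm). replace (y - 1 + 1) with y in H by ring. lra.
Qed.

Lemma Hsh_eq x : Hsh x = Hshm 1 x.
Proof.
  unfold Hsh, Hshm. f_equal. f_equal. apply functional_extensionality; intros k.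
  rewrite !pow_1; reflexivity.
Qed.

Lemma cv_Hsh x : Un_cv (psum (fun k => 1 / INR k - 1 / (INR k + x))) (Hsh x).
Proof.
  rewrite Hsh_eq. apply Un_cv_ext with (psum (tm 1 x)).
  { intros; unfold psum, tm. apply fsum_ext; intros; rewrite !pow_1; auto. }
  apply cv_Hshm; auto.
Qed.

Lemma Hsh_shift_down y : Hsh (y - 1) = Hsh y - 1 / y.
Proof. rewrite !Hsh_eq, Hshm_shift_down, pow_1; auto. Qed.

Lemma Hsh_0 : Hsh 0 = 0.
Proof.
  apply lim_seq_eq. apply Un_cv_ext with (fun _ => 0); [|apply cv_const].
  intros N; unfold psum. rewrite <- (fsum_zero N) at 1. apply fsum_ext; intros; rewrite Rplus_0_r; ring.
Qed.

Lemma cv_zeta2 : Un_cv (psum (fun n => 1 / INR n ^ 2)) (zeta 2).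
Proof.
  destruct (growing_cv (psum (fun n => 1 / INR n ^ 2))) as [l Hl].
  - intros n. unfold psum. change (fsum (S n) (fun n => 1 / INR n ^ 2)) with (fsum n (fun n => 1 / INR n ^ 2) + 1 / INR (S n) ^ 2). assert (0 < 1 / INR (S n) ^ 2).
    { apply Rdiv_lt_0_compat; [lra|]. apply pow_lt, lt_0_INR; lia. } lra.
  - exists 2. intros y [i ->]. apply sum_inv_sq_bound'.
  - unfold zeta. rewrite (lim_seq_eq _ _ Hl); auto.
Qed.

Lemma Hshm2_iter y n : Hshm 2 (y + INR n) = Hshm 2 y + fsum n (fun j => 1 / (y + INR j) ^ 2).
Proof.
  induction n.
  - simpl. rewrite Rplus_0_r; ring.
  - rewrite S_INR. replace (y + (INR n + 1)) with ((y + INR n) + 1) by ring.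
    rewrite Hshm_shift by lia. rewrite IHn. change (fsum (S n) ?f) with (fsum n f + f (S n)). cbv beta. rewrite S_INR.
    replace (y + (INR n + 1)) with ((y + INR n) + 1) by ring. ring.
Qed.

Lemma cv_inv_sq c : Un_cv (psum (fun n => 1 / (INR n + c) ^ 2)) (zeta 2 - Hshm 2 c).
Proof.
  apply Un_cv_ext with (fun N => psum (fun n => 1 / INR n ^ 2) N - psum (tm 2 c) N).
  { intros N; unfold psum, tm. rewrite <- fsum_minus. apply fsum_ext; intros; ring. }
  apply CV_minus; [apply cv_zeta2| apply cv_Hshm; lia].
Qed.

Lemma INR_pos n : (1 <= n)%nat -> 0 < INR n.
Proof. intros; apply lt_0_INR; lia. Qed.

Lemma fsum_lin3 N a b f g h :
  fsum N (fun n => a * (f n - g n) - b * h n) = a * (fsum N f - fsum N g) - b * fsum N h.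
Proof. induction N; simpl; [ring| rewrite IHN; ring]. Qed.

Lemma cv_L6 s c : c <> s -> (forall n, (1 <= n)%nat -> INR n + s <> 0) ->
  (forall n, (1 <= n)%nat -> INR n + c <> 0) ->
  Un_cv (psum (fun n => 1 / ((INR n + s) * (INR n + c) ^ 2)))
    ((Hsh c - Hsh s) / (c - s) ^ 2 - (zeta 2 - Hshm 2 c) / (c - s)).
Proof.
  intros Hcs Hs Hc.
  apply Un_cv_ext with (fun N => (1 / (c - s) ^ 2) *
     (psum (fun k => 1 / INR k - 1 / (INR k + c)) N - psum (fun k => 1 / INR k - 1 / (INR k + s)) N)
     - (1 / (c - s)) * psum (fun n => 1 / (INR n + c) ^ 2) N).
  { intros N. unfold psum. rewrite <- fsum_lin3. apply fsum_ext. intros j Hj.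
    pose proof (INR_pos j ltac:(lia)). pose proof (Hs j ltac:(lia)). pose proof (Hc j ltac:(lia)).
    field. repeat split; auto; lra. }
  eapply Un_cv_eql; [|apply CV_minus; [apply cv_scal, CV_minus; apply cv_Hsh| apply cv_scal, cv_inv_sq]].
  field. lra.
Qed.

Lemma abel N (u a : nat -> R) :
  fsum N (fun n => u n * (a n - a (S n))) =
  u 0%nat * a 1%nat + fsum N (fun n => (u n - u (pred n)) * a n) - u N * a (S N).
Proof. induction N; simpl; [ring| rewrite IHN; simpl; ring]. Qed.

Lemma cv_E x : 0 < x ->
  Un_cv (psum (fun p => Hshm 2 (INR p + x) / (INR p * (INR p + 1))))
    (Hshm 2 x + Hsh x / x ^ 2 - (zeta 2 - Hshm 2 x) / x).
Proof.
  intros Hx.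
  set (u := fun n : nat => Hshm 2 (INR n + x)).
  set (a := fun n : nat => 1 / INR n).
  apply Un_cv_ext with (fun N => u 0%nat * a 1%nat + psum (fun n => 1 / ((INR n + 0) * (INR n + x) ^ 2)) N
                                 - u N * a (S N)).
  { intros N. unfold psum. symmetry.
    transitivity (fsum N (fun n => u n * (a n - a (S n)))).
    { apply fsum_ext. intros j Hj. unfold u, a. pose proof (INR_pos j ltac:(lia)).
      rewrite S_INR. field. lra. }
    rewrite abel. f_equal. f_equal. apply fsum_ext. intros j Hj.
    unfold u, a. pose proof (INR_pos j ltac:(lia)).
    destruct j as [|j']; [lia|]. simpl pred.
    replace (INR j' + x) with ((INR (S j') + x) - 1) by (rewrite S_INR; ring).
    rewrite Hshm_shift_down by lia.
    field. split; lra. }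
  eapply Un_cv_eql; [| apply CV_minus; [apply CV_plus; [apply cv_const|]|]].
  3: { apply CV_mult.
       - unfold u. apply Un_cv_ext with (fun N => Hshm 2 x + psum (fun n => 1 / (INR n + x) ^ 2) N).
         + intros N. rewrite (Rplus_comm (INR N) x), Hshm2_iter. unfold psum. f_equal. apply fsum_ext; intros; f_equal; f_equal; ring.
         + apply CV_plus; [apply cv_const| apply cv_inv_sq].
       - unfold a. apply Un_cv_ext with (fun N => 1 / (INR N + 1) ^ 1).
         + intros; rewrite S_INR, pow_1; auto.
         + apply cv_inv_pow; auto. }
  2: { apply cv_L6; intros; try lra; pose proof (INR_pos n H); lra. }
  unfold u, a. rewrite Hsh_0. simpl INR. rewrite Rplus_0_l. field. lra.
Qed.

Definition Ev (x : R) := Hshm 2 x + Hsh x / x ^ 2 - (zeta 2 - Hshm 2 x) / x.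

Lemma cv_D alpha s : 0 < alpha - INR s ->
  Un_cv (psum (fun n => Hshm 2 (INR n + alpha) / ((INR n + INR s) * (INR n + INR s + 1))))
    (Ev (alpha - INR s) - fsum s (fun p => Hshm 2 (INR p + (alpha - INR s)) / (INR p * (INR p + 1)))).
Proof.
  intros Hx.
  set (g := fun p : nat => Hshm 2 (INR p + (alpha - INR s)) / (INR p * (INR p + 1))).
  apply Un_cv_ext with (fun N => psum g (N + s) - psum g s).
  { intros N. unfold psum. rewrite fsum_shift. ring_simplify. apply fsum_ext. intros j _.
    unfold g. rewrite plus_INR.
    replace (INR j + INR s + (alpha - INR s)) with (INR j + alpha) by ring. reflexivity. }
  apply CV_minus; [| apply cv_const].
  apply (CV_shift' (psum g) s). apply cv_E; auto.
Qed.

Definition Tb (r : nat) (alpha : R) (k : nat) :=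
  (INR r - alpha) * fsum r (fun j => Hshm 2 (alpha + INR j - INR r) / (INR j * (alpha + INR j - INR r)))
  - (INR k - alpha) * fsum k (fun j => Hshm 2 (alpha + INR j - INR k) / (INR j * (alpha + INR j - INR k)))
  - fsum (k - r) (fun j => Hsh (alpha + INR j - INR k) / (alpha + INR j - INR k) ^ 2)
  + 2 * Hshm 3 (alpha - INR r) + Hsh (alpha - INR k) * zeta 2
  + 2 * Hsh (alpha - INR r) * Hshm 2 (alpha - INR r)
  - 2 * Hshm 3 (alpha - INR k) - Hsh (alpha - INR r) * zeta 2
  - 2 * Hsh (alpha - INR k) * Hshm 2 (alpha - INR k).

Lemma fsum_lin3' N p q f g h :
  fsum N (fun j => p * f j - q * g j - h j) = p * fsum N f - q * fsum N g - fsum N h.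
Proof. induction N; simpl; [ring| rewrite IHN; ring]. Qed.

Lemma Tb_step r alpha k : (r <= k)%nat -> 0 < alpha - INR k ->
  Tb r alpha (S k) = Tb r alpha k + (Ev (alpha - INR k)
     - fsum k (fun p => Hshm 2 (INR p + (alpha - INR k)) / (INR p * (INR p + 1)))).
Proof.
  intros Hrk Hx.
  assert (E1 : fsum (S k) (fun j => Hshm 2 (alpha + INR j - INR (S k)) / (INR j * (alpha + INR j - INR (S k))))
     = Hshm 2 (alpha - INR k) / (alpha - INR k) +
       fsum k (fun j => Hshm 2 (alpha + INR j - INR k) / ((INR j + 1) * (alpha + INR j - INR k)))).
  { rewrite fsum_S1. f_equal.
    - replace (alpha + INR 1 - INR (S k)) with (alpha - INR k) by (rewrite (S_INR k); simpl; ring).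
      simpl INR. field. lra.
    - apply fsum_ext. intros j _.
      replace (alpha + INR (S j) - INR (S k)) with (alpha + INR j - INR k) by (rewrite !S_INR; ring).
      rewrite S_INR. reflexivity. }
  assert (E2 : fsum (S k - r) (fun j => Hsh (alpha + INR j - INR (S k)) / (alpha + INR j - INR (S k)) ^ 2)
     = Hsh (alpha - INR k) / (alpha - INR k) ^ 2 +
       fsum (k - r) (fun j => Hsh (alpha + INR j - INR k) / (alpha + INR j - INR k) ^ 2)).
  { replace (S k - r)%nat with (S (k - r)) by lia. rewrite fsum_S1. f_equal.
    - replace (alpha + INR 1 - INR (S k)) with (alpha - INR k) by (rewrite (S_INR k); simpl; ring). reflexivity.
    - apply fsum_ext. intros j _.
      replace (alpha + INR (S j) - INR (S k)) with (alpha + INR j - INR k) by (rewrite !S_INR; ring).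
      reflexivity. }
  assert (Ek : alpha - INR (S k) = (alpha - INR k) - 1) by (rewrite S_INR; ring).
  assert (E3 : Hsh (alpha - INR (S k)) = Hsh (alpha - INR k) - 1 / (alpha - INR k))
    by (rewrite Ek; apply Hsh_shift_down).
  assert (E4 : Hshm 2 (alpha - INR (S k)) = Hshm 2 (alpha - INR k) - 1 / (alpha - INR k) ^ 2)
    by (rewrite Ek; apply Hshm_shift_down; lia).
  assert (E5 : Hshm 3 (alpha - INR (S k)) = Hshm 3 (alpha - INR k) - 1 / (alpha - INR k) ^ 3)
    by (rewrite Ek; apply Hshm_shift_down; lia).
  assert (E6 : fsum k (fun p => Hshm 2 (INR p + (alpha - INR k)) / (INR p * (INR p + 1)))
     = fsum k (fun j => Hshm 2 (alpha + INR j - INR k) / (INR j * (INR j + 1)))).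
  { apply fsum_ext; intros j _. replace (INR j + (alpha - INR k)) with (alpha + INR j - INR k) by ring. reflexivity. }
  assert (E7 : fsum k (fun j => Hshm 2 (alpha + INR j - INR k) / (INR j * (alpha + INR j - INR k)))
     = ((alpha - INR k - 1) * fsum k (fun j => Hshm 2 (alpha + INR j - INR k) / ((INR j + 1) * (alpha + INR j - INR k)))
        + fsum k (fun j => Hshm 2 (alpha + INR j - INR k) / (INR j * (INR j + 1)))) / (alpha - INR k)).
  { apply Rmult_eq_reg_l with (alpha - INR k); [|lra].
    replace ((alpha - INR k) * (((alpha - INR k - 1) * fsum k (fun j => Hshm 2 (alpha + INR j - INR k) / ((INR j + 1) * (alpha + INR j - INR k)))
        + fsum k (fun j => Hshm 2 (alpha + INR j - INR k) / (INR j * (INR j + 1)))) / (alpha - INR k)))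
      with ((alpha - INR k - 1) * fsum k (fun j => Hshm 2 (alpha + INR j - INR k) / ((INR j + 1) * (alpha + INR j - INR k)))
        + fsum k (fun j => Hshm 2 (alpha + INR j - INR k) / (INR j * (INR j + 1)))) by (field; lra).
    match goal with |- ?L = ?P * ?B + ?C => enough (L - P * B - C = 0) by lra end.
    replace ((alpha - INR k) * fsum k (fun j => Hshm 2 (alpha + INR j - INR k) / (INR j * (alpha + INR j - INR k)))
       - (alpha - INR k - 1) * fsum k (fun j => Hshm 2 (alpha + INR j - INR k) / ((INR j + 1) * (alpha + INR j - INR k)))
       - fsum k (fun j => Hshm 2 (alpha + INR j - INR k) / (INR j * (INR j + 1))))
      with (fsum k (fun _ => 0)).
    - apply fsum_zero.
    - rewrite <- fsum_lin3'. apply fsum_ext. intros j Hj. pose proof (INR_pos j ltac:(lia)).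
      field. lra. }
  unfold Tb, Ev. rewrite E1, E2, E3, E4, E5, E6, E7. rewrite S_INR. field. lra.
Qed.

Lemma cv_main r alpha d : INR (r + d) < alpha ->
  Un_cv (psum (fun n => Hshm 2 (INR n + alpha) * (1 / (INR n + INR r) - 1 / (INR n + INR (r + d)))))
    (Tb r alpha (r + d)).
Proof.
  induction d; intros Hd.
  - rewrite Nat.add_0_r.
    apply Un_cv_ext with (fun _ => 0).
    { intros N. unfold psum. rewrite <- (fsum_zero N) at 1. apply fsum_ext; intros; ring. }
    eapply Un_cv_eql; [| apply cv_const]. unfold Tb. rewrite Nat.sub_diag. simpl fsum. ring.
  - rewrite Nat.add_succ_r in *. set (k := (r + d)%nat) in *.
    assert (Hk : INR k < alpha) by (rewrite S_INR in Hd; lra).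
    apply Un_cv_ext with (fun N => psum (fun n => Hshm 2 (INR n + alpha) * (1 / (INR n + INR r) - 1 / (INR n + INR k))) N
       + psum (fun n => Hshm 2 (INR n + alpha) / ((INR n + INR k) * (INR n + INR k + 1))) N).
    { intros N. unfold psum. rewrite <- fsum_plus. apply fsum_ext. intros j Hj.
      pose proof (INR_pos j ltac:(lia)). pose proof (pos_INR r). pose proof (pos_INR k).
      rewrite S_INR. field. repeat split; lra. }
    eapply Un_cv_eql; [| apply CV_plus; [apply IHd; lra| apply cv_D; lra]].
    rewrite Tb_step; [reflexivity| unfold k; lia| lra].
Qed.

Lemma cv_single r k c : (r < k)%nat -> c <> INR r -> c <> INR k ->
  (forall n, (1 <= n)%nat -> INR n + c <> 0) ->
  Un_cv (psum (fun n => 1 / ((INR n + INR r) * (INR n + INR k) * (INR n + c) ^ 2)))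
    (1 / (INR k - INR r) *
      (((Hsh c - Hsh (INR r)) / (c - INR r) ^ 2 - (zeta 2 - Hshm 2 c) / (c - INR r))
       - ((Hsh c - Hsh (INR k)) / (c - INR k) ^ 2 - (zeta 2 - Hshm 2 c) / (c - INR k)))).
Proof.
  intros Hrk Hr Hk Hc.
  assert (INR r < INR k) by (apply lt_INR; auto).
  apply Un_cv_ext with (fun N => 1 / (INR k - INR r) *
     (psum (fun n => 1 / ((INR n + INR r) * (INR n + c) ^ 2)) N
      - psum (fun n => 1 / ((INR n + INR k) * (INR n + c) ^ 2)) N)).
  { intros N. unfold psum. rewrite <- fsum_minus, <- fsum_scal. apply fsum_ext. intros j Hj.
    pose proof (INR_pos j ltac:(lia)). pose proof (pos_INR r). pose proof (Hc j ltac:(lia)).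
    field. repeat split; lra. }
  apply cv_scal, CV_minus; apply cv_L6; auto; intros n Hn; pose proof (INR_pos n Hn); pose proof (pos_INR r);
    pose proof (pos_INR k); lra.
Qed.

Lemma cv_fpart r k (c : nat -> R) m : (r < k)%nat ->
  (forall j, (1 <= j <= m)%nat -> c j <> INR r /\ c j <> INR k /\ forall n, (1 <= n)%nat -> INR n + c j <> 0) ->
  Un_cv (psum (fun n => fsum m (fun j => 1 / ((INR n + INR r) * (INR n + INR k) * (INR n + c j) ^ 2))))
    (fsum m (fun j => 1 / (INR k - INR r) *
      (((Hsh (c j) - Hsh (INR r)) / (c j - INR r) ^ 2 - (zeta 2 - Hshm 2 (c j)) / (c j - INR r))
       - ((Hsh (c j) - Hsh (INR k)) / (c j - INR k) ^ 2 - (zeta 2 - Hshm 2 (c j)) / (c j - INR k))))).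
Proof.
  intros Hrk. induction m; intros Hc.
  - simpl. apply Un_cv_ext with (fun _ => 0); [|apply cv_const].
    intros N; unfold psum. rewrite <- (fsum_zero N) at 1. apply fsum_ext; intros; reflexivity.
  - apply Un_cv_ext with (fun N => psum (fun n => fsum m (fun j => 1 / ((INR n + INR r) * (INR n + INR k) * (INR n + c j) ^ 2))) N
      + psum (fun n => 1 / ((INR n + INR r) * (INR n + INR k) * (INR n + c (S m)) ^ 2)) N).
    { intros N. unfold psum. rewrite <- fsum_plus. apply fsum_ext; intros; reflexivity. }
    apply CV_plus.
    + apply IHm. intros j Hj; apply Hc; lia.
    + destruct (Hc (S m) ltac:(lia)) as (H1 & H2 & H3). apply cv_single; auto.
Qed.

Lemma fsum_lin4 N a (f1 f2 f3 f4 : nat -> R) :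
  fsum N (fun j => a * ((f1 j - f2 j) - (f3 j - f4 j))) =
  a * (fsum N f1 - fsum N f2 - fsum N f3 + fsum N f4).
Proof. induction N; simpl; [ring| rewrite IHN; ring]. Qed.

Theorem corollary2p5 (r k m : nat) (alpha : R)
  (hr : (0 < r)%nat) (hk : (0 < k)%nat) (hm : (0 < m)%nat)
  (hrk : (r < k)%nat) (hka : INR k < alpha)
  (hneg : forall n : nat, alpha - INR m <> - INR (S n))
  (hjr : forall j : nat, (1 <= j <= m)%nat -> alpha <> INR m + INR r - INR j)
  (hjk : forall j : nat, (1 <= j <= m)%nat -> alpha <> INR m + INR k - INR j) :
  Un_cv
    (psum (fun n => Hshm 2 (INR n + alpha - INR m) / ((INR n + INR r) * (INR n + INR k))))
    ( 1 / (INR k - INR r) *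
        ( (INR r - alpha) * fsum r (fun j => Hshm 2 (alpha + INR j - INR r) / (INR j * (alpha + INR j - INR r)))
        - (INR k - alpha) * fsum k (fun j => Hshm 2 (alpha + INR j - INR k) / (INR j * (alpha + INR j - INR k)))
        - fsum (k - r) (fun j => Hsh (alpha + INR j - INR k) / (alpha + INR j - INR k) ^ 2)
        + 2 * Hshm 3 (alpha - INR r) + Hsh (alpha - INR k) * zeta 2
        + 2 * Hsh (alpha - INR r) * Hshm 2 (alpha - INR r)
        - 2 * Hshm 3 (alpha - INR k) - Hsh (alpha - INR r) * zeta 2
        - 2 * Hsh (alpha - INR k) * Hshm 2 (alpha - INR k) )
    - 1 / (INR k - INR r) *
        ( fsum m (fun j => (Hsh (alpha + INR j - INR m) - Hsh (INR r)) / (alpha + INR j - INR m - INR r) ^ 2)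
        - fsum m (fun j => (zeta 2 - Hshm 2 (alpha + INR j - INR m)) / (alpha + INR j - INR m - INR r))
        - fsum m (fun j => (Hsh (alpha + INR j - INR m) - Hsh (INR k)) / (alpha + INR j - INR m - INR k) ^ 2)
        + fsum m (fun j => (zeta 2 - Hshm 2 (alpha + INR j - INR m)) / (alpha + INR j - INR m - INR k)) )).
Proof.
  assert (Hrk : INR r < INR k) by (apply lt_INR; auto).
  assert (Hc : forall n j, (1 <= n)%nat -> (1 <= j <= m)%nat -> INR n + (alpha + INR j - INR m) <> 0).
  { intros n j Hn Hj Heq. apply (hneg (n + j - 1)%nat).
    replace (S (n + j - 1)) with (n + j)%nat by lia. rewrite plus_INR. lra. }
  assert (Hmain := cv_main r alpha (k - r) ltac:(replace (r + (k - r))%nat with k by lia; lra)).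
  replace (r + (k - r))%nat with k in Hmain by lia.
  assert (Hf := cv_fpart r k (fun j => alpha + INR j - INR m) m hrk).
  specialize (Hf ltac:(intros j Hj; repeat split;
    [pose proof (hjr j Hj); lra | pose proof (hjk j Hj); lra | intros n Hn; apply Hc; auto])).
  cbv beta in Hf.
  apply Un_cv_ext with (fun N => 1 / (INR k - INR r) *
      psum (fun n => Hshm 2 (INR n + alpha) * (1 / (INR n + INR r) - 1 / (INR n + INR k))) N
      - psum (fun n => fsum m (fun j => 1 / ((INR n + INR r) * (INR n + INR k) * (INR n + (alpha + INR j - INR m)) ^ 2))) N).
  { intros N. unfold psum. rewrite <- fsum_scal, <- fsum_minus. apply fsum_ext. intros n Hn.
    pose proof (INR_pos n ltac:(lia)). pose proof (pos_INR r).
    pose proof (Hshm2_iter (INR n + alpha - INR m) m) as Hit.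
    replace (INR n + alpha - INR m + INR m) with (INR n + alpha) in Hit by ring.
    rewrite Hit.
    replace (fsum m (fun j => 1 / ((INR n + INR r) * (INR n + INR k) * (INR n + (alpha + INR j - INR m)) ^ 2)))
      with (1 / ((INR n + INR r) * (INR n + INR k)) * fsum m (fun j => 1 / (INR n + alpha - INR m + INR j) ^ 2)).
    - field. repeat split; lra.
    - rewrite <- fsum_scal. apply fsum_ext. intros j Hj.
      replace (INR n + (alpha + INR j - INR m)) with (INR n + alpha - INR m + INR j) by ring.
      pose proof (Hc n j ltac:(lia) Hj) as Hcj.
      replace (INR n + (alpha + INR j - INR m)) with (INR n + alpha - INR m + INR j) in Hcj by ring.
      field. repeat split; lra. }
  eapply Un_cv_eql; [| apply CV_minus; [apply cv_scal, Hmain| apply Hf]].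
  rewrite fsum_lin4. unfold Tb. ring.
Qed.
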